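(* Let $q\ge 2$ and let $f:\mathbb{N}\to\{0,1\}$ be a multiplicative $q$-automatic sequence such that the set $\mathbb{P}_0=\{p \text{ prime}: f(p)=0\}$ is infinite. Then $f(p)=0$ for all sufficiently large primes $p$.
   Context: $f$ multiplicative means $f(mn)=f(m)f(n)$ whenever $\gcd(m,n)=1$; $f$ is $q$-automatic if its $q$-kernel $\{\{f(q^in+r)\}_{n\ge 0}: i\ge 1, 0\le r\le q^i-1\}$ is a finite set of sequences. *)

(* Defs.v *)
From mathcomp Require Import all_boot.
Set Implicit Arguments. Unset Strict Implicit. Unset Printing Implicit Defensive.

Definition multiplicative (f : nat -> nat) : Prop :=
  forall m n : nat, coprime m n -> f (m * n) = f m * f n.

Definition kernel_seq (f : nat -> nat) (q i r : nat) : nat -> nat :=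
  fun n => f (q ^ i * n + r).

Definition automatic (q : nat) (f : nat -> nat) : Prop :=
  exists L : seq (nat -> nat),
    forall i r : nat, 1 <= i -> r < q ^ i ->
      exists2 k : nat, k < size L &
        forall n : nat, kernel_seq f q i r n = nth (fun _ => 0) L k n.

(* Main.v *)
Require Import Defs.
From mathcomp Require Import all_boot zify.
From mathcomp Require Import cyclic.
From Stdlib Require Import Classical ClassicalEpsilon ArithRing.
Lemma pigeon (h : nat -> nat) s : (forall k, k <= s -> h k < s) ->
  exists j k, j < k /\ k <= s /\ h j = h k.
Proof.
case: s => [|s] H; first by have := H 0 (leqnn 0).
pose g (x : 'I_s.+2) : 'I_s.+1 := Ordinal (H x (ltn_ord x)).
have : ~~ injectiveb g.
  apply/negP => /injectiveP inj; have := leq_card _ inj.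
  by rewrite !card_ord ltnn.
case/injectivePn => x [y] xy gxy.
have hxy : h x = h y by move: gxy => /(congr1 val).
case: (ltngtP x y) => [lt|gt|eq].
- by exists x, y; split => //; split => //; rewrite -ltnS.
- by exists y, x; split => //; split => //; rewrite -ltnS.
- by move: xy; rewrite (val_inj eq) eqxx.
Qed.

Lemma cop_prod (F : nat -> nat) n j k :
  (forall t, j <= t < k -> coprime (F t) n) -> coprime (\prod_(j <= t < k) F t) n.
Proof.
elim: k => [|k IH] H; first by rewrite big_geq // coprime1n.
case: (leqP j k) => jk; last by rewrite big_geq ?coprime1n // ltnW.
rewrite big_nat_recr //= coprimeMl; apply/andP; split.
  by apply: IH => t /andP[a b]; apply: H; rewrite a ltnW.
by apply: H; rewrite jk leqnn.
Qed.


Lemma coprime_step c m y : 0 < m -> coprime c (m - 1) -> c %| y.+1 ->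
  coprime c (m * y + 1).
Proof.
move=> m0 cm cy; rewrite /coprime; set g := gcdn _ _.
have gc : g %| c by apply: dvdn_gcdl.
have gn : g %| m * y + 1 by apply: dvdn_gcdr.
have gy : g %| m * y.+1 by apply: dvdn_mull; apply: dvdn_trans cy.
have e : m * y.+1 = (m * y + 1) + (m - 1) by lia.
rewrite e (dvdn_addr _ gn) in gy.
have : g %| gcdn c (m - 1) by rewrite dvdn_gcd gc gy.
by move: cm; rewrite /coprime => /eqP ->; rewrite dvdn1.
Qed.

Definition affine (m : nat) (F : nat -> nat) := forall y, F y = m * y + F 0.

Lemma affine_comp m1 m2 F G : affine m1 F -> affine m2 G -> affine (m1 * m2) (F \o G).
Proof.
move=> hF hG y /=; rewrite hG (hF (_ + _)) (hF (G 0)).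
move: (G 0) (F 0) => a b; nia.
Qed.

Lemma affine_iter m F k : affine m F -> affine (m ^ k) (iter k F).
Proof.
move=> hF; elim: k => [|k IH] y /=; first by rewrite expn0 mul1n addn0.
rewrite IH (hF (_ + _)) (hF (iter k F 0)) expnS.
move: (m ^ k) (iter k F 0) (F 0) => a b z; nia.
Qed.

Lemma iter_mod F m d : affine m F -> m = 1 %[mod d] ->
  forall n, iter n F 0 = n * F 0 %[mod d].
Proof.
move=> hF hm; elim => [|n IH] /=; first by rewrite mul0n.
rewrite hF -modnDml -modnMml hm modnMml mul1n modnDml.
by rewrite -modnDml IH modnDml mulSn addnC.
Qed.

Lemma diff_arith c Q z : 0 < c -> 0 < Q ->
  c * (Q * Q) * (c * Q * z + (c - 1)) + (c - 1) =
  c * Q * (c * (Q * Q) * z + (c - 1)) + (c - 1) + c * Q * (c - 1) * (Q - 1).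
Proof.
case: c => [//|b] _; case: Q => [//|d] _; rewrite !subn1 /=.
rewrite -!plusE -!multE; ring.
Qed.

Lemma arith2 k P : 0 < P -> (k * (P * P) + (P - 1)).+1 = P * (k * P + 1).
Proof. case: P => [//|p] _; rewrite subn1 /= -addn1 -!plusE -!multE; ring. Qed.

Lemma main_contra (f : nat -> nat) q i Q c P :
  multiplicative f -> f 1 = 1 ->
  (forall y, q ^ i %| y -> f (Q * y + 1) = f (y + 1)) ->
  1 < Q -> 1 < c -> q ^ i %| c - 1 -> f c = 1 ->
  coprime c (Q - 1) -> coprime c (Q * Q - 1) ->
  prime P -> f P = 0 -> c < P -> Q < P -> False.
Proof.
move=> hmul f1 hloop Q1 c1 cd fc cQ1 cQ2 pP fP cP QP.
pose Xh y := c * Q * y + (c - 1).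
pose Yh y := c * (Q * Q) * y + (c - 1).
pose Inv y := q ^ i %| y /\ (y = 0 \/ c %| y.+1).
pose good (W : nat -> nat) := forall y, Inv y -> Inv (W y) /\ f (W y).+1 = f y.+1.
have cop m y : 0 < m -> coprime c (m - 1) -> (y = 0 \/ c %| y.+1) -> coprime c (m * y + 1).
  move=> m0 cm [->|hy]; first by rewrite muln0 add0n coprimen1.
  exact: coprime_step.
have gX : good Xh.
  move=> y [dy hy]; have e : (Xh y).+1 = c * (Q * y + 1) by rewrite /Xh; nia.
  split; first split.
  - by rewrite /Xh dvdn_add // dvdn_mull.
  - by right; rewrite e dvdn_mulr.
  by rewrite e hmul ?cop // ?fc ?mul1n ?hloop ?addn1 //; lia.
have gY : good Yh.
  move=> y [dy hy]; have e : (Yh y).+1 = c * (Q * Q * y + 1) by rewrite /Yh; nia.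
  split; first split.
  - by rewrite /Yh dvdn_add // dvdn_mull.
  - by right; rewrite e dvdn_mulr.
  rewrite e hmul ?cop // ?fc ?mul1n; last by lia.
  by rewrite -mulnA hloop ?dvdn_mull // hloop // addn1.
have gC F G : good F -> good G -> good (F \o G).
  by move=> hF hG y /hG [/hF [h1 h2] h3]; split => //=; rewrite h2.
have gI F k : good F -> good (iter k F).
  move=> hF; elim: k => [|k IH] y hy //=.
  by case: (IH y hy) => h1 h2; case: (hF _ h1) => h3 h4; split => //; rewrite h4.
pose E := totient (P ^ 2).
have P0 : 0 < P by apply: prime_gt0.
have E0 : 0 < E by rewrite totient_gt0 expn_gt0 P0.
pose G := iter E.-1 (Yh \o Xh).
pose W1 := Xh \o (Yh \o G).
pose W2 := Yh \o (Xh \o G).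
have aX : affine (c * Q) Xh by move=> y; rewrite /Xh muln0 add0n.
have aY : affine (c * (Q * Q)) Yh by move=> y; rewrite /Yh muln0 add0n.
pose M0 := c * (Q * Q) * (c * Q).
have aG : affine (M0 ^ E.-1) G by apply: affine_iter; apply: affine_comp.
have eM : c * Q * (c * (Q * Q) * M0 ^ E.-1) = M0 ^ E.
  by rewrite -{2}(prednK E0) expnS mulnA /M0 (mulnC (c * Q)).
have eM2 : c * (Q * Q) * (c * Q * M0 ^ E.-1) = M0 ^ E.
  by rewrite -{2}(prednK E0) expnS mulnA.
have aW1 : affine (M0 ^ E) W1.
  by rewrite -eM; apply: affine_comp => //; apply: affine_comp.
have aW2 : affine (M0 ^ E) W2.
  by rewrite -eM2; apply: affine_comp => //; apply: affine_comp.
have ndvd n : 0 < n -> n < P -> ~~ (P %| n).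
  by move=> n0 nP; apply/negP => /(dvdn_leq n0); rewrite leqNgt nP.
have copP n : 0 < n -> n < P -> coprime n P.
  by move=> n0 nP; rewrite coprime_sym prime_coprime // ndvd.
have cM : coprime M0 (P ^ 2).
  apply: coprimeXr; rewrite /M0 !coprimeMl !copP //; lia.
have hM : M0 ^ E = 1 %[mod P ^ 2] by apply: Euler_exp_totient.
have gW1 : good W1 by apply: (gC) => //; apply: (gC) => //; apply: (gI); apply: (gC).
have gW2 : good W2 by apply: (gC) => //; apply: (gC) => //; apply: (gI); apply: (gC).
have diff : W2 0 = W1 0 + c * Q * (c - 1) * (Q - 1).
  rewrite /W1 /W2 /=; move: (G 0) => z; rewrite /Xh /Yh.
  apply: diff_arith; lia.
have ndiff : ~~ (P %| c * Q * (c - 1) * (Q - 1)).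
  by rewrite !Euclid_dvdM // !negb_or !ndvd //; lia.
have [F [aF [gF nF]]] : exists F, affine (M0 ^ E) F /\ good F /\ ~~ (P %| F 0).
  case: (boolP (P %| W1 0)) => h1; last by exists W1.
  exists W2; split => //; split => //; rewrite diff (dvdn_addr _ h1) //.
set t := F 0 in nF.
have ct : coprime t (P ^ 2) by apply: coprimeXr; rewrite coprime_sym prime_coprime.
pose n := (P - 1) * t ^ E.-1.
have hy : iter n F 0 = P - 1 %[mod P ^ 2].
  rewrite (iter_mod _ _ _ aF hM) /n -mulnA -expnSr (prednK E0).
  by rewrite -modnMmr Euler_exp_totient // modnMmr muln1.
have := gI F n gF 0 (conj (dvdn0 _) (or_introl erefl)).
move: (iter n F 0) hy => y hy [Inv1 fy].
have {}fy : f y.+1 = 1 by rewrite fy; exact: f1.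
have ey := divn_eq y (P ^ 2).
have PP : P - 1 < P ^ 2.
  have h : P - 1 < P by rewrite subn1 ltn_predL.
  by rewrite -mulnn; apply: leq_trans h (leq_pmulr _ P0).
rewrite hy modn_small // in ey.
have e : y.+1 = P * (y %/ P ^ 2 * P + 1).
  by rewrite {1}ey -mulnn arith2.
move: fy; rewrite e hmul ?fP //.
by rewrite -coprime_modr modnMDl coprime_modr coprimen1.
Qed.
Lemma make_c (f : nat -> nat) (M B0 : nat) :
  multiplicative f -> f 1 = 1 -> 0 < M ->
  (forall N, exists p, N < p /\ prime p /\ f p = 1) ->
  (forall p, prime p -> B0 < p -> coprime p M) ->
  exists c, 1 < c /\ M %| c - 1 /\ f c = 1 /\
     (forall n, 0 < n <= B0 -> coprime c n).
Proof.
move=> hmul f1 M0 hone hpM.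
pose nextp N := proj1_sig (constructive_indefinite_description _ (hone N)).
have hnext N : N < nextp N /\ prime (nextp N) /\ f (nextp N) = 1.
  exact: (proj2_sig (constructive_indefinite_description _ (hone N))).
pose p_ k := iter k.+1 nextp B0.
have pS k : p_ k < p_ k.+1 by rewrite /p_ iterS; case: (hnext (p_ k)).
have pP k : prime (p_ k) /\ f (p_ k) = 1 by rewrite /p_ iterS; case: (hnext (iter k nextp B0)) => _ [].
have pB k : B0 < p_ k.
  elim: k => [|k IH]; first by rewrite /p_ /=; case: (hnext B0).
  exact: ltn_trans IH (pS k).
have pmono t k : t < k -> p_ t < p_ k.
  elim: k => [//|k IH]; rewrite ltnS leq_eqVlt => /orP[/eqP -> //|tk].
  exact: ltn_trans (IH tk) (pS k).
have copn t n : 0 < n <= B0 -> coprime (p_ t) n.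
  move=> /andP[n0 nB]; rewrite prime_coprime; last by case: (pP t).
  apply/negP => /(dvdn_leq n0) h; have := pB t; lia.
pose prod j k := \prod_(j <= t < k) p_ t.
have prod_gt0 j k : 0 < prod j k.
  by apply: prodn_gt0 => t; case: (pP t) => /prime_gt0.
have fprod j k : j <= k -> f (prod j k) = 1.
  elim: k => [|k IH]; first by rewrite leqn0 => /eqP ->; rewrite /prod big_geq.
  rewrite leq_eqVlt => /orP[/eqP ->|]; first by rewrite /prod big_geq.
  rewrite ltnS => jk; rewrite /prod big_nat_recr //= hmul.
    by rewrite IH // (proj2 (pP k)).
  apply: cop_prod => t /andP[_ tk].
  rewrite prime_coprime; last by case: (pP t).
  rewrite dvdn_prime2; try by [case: (pP t) | case: (pP k)].
  by rewrite neq_ltn pmono.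
have [j [k [jk [kM e]]]] : exists j k, j < k /\ k <= M /\ prod 0 j %% M = prod 0 k %% M.
  by apply: pigeon => t _; rewrite ltn_pmod.
exists (prod j k); split.
  have -> : prod j k = p_ j * prod j.+1 k by rewrite /prod big_ltn.
  have := prod_gt0 j.+1 k; have := prime_gt1 (proj1 (pP j)).
  move: (p_ j) (prod j.+1 k) => a b; nia.
split.
  have sp : prod 0 k = prod 0 j * prod j k by rewrite /prod -big_cat_nat // ltnW.
  have hle : prod 0 j <= prod 0 k by rewrite sp leq_pmulr.
  move/eqP: e; rewrite eq_sym eqn_mod_dvd // sp -{2}(muln1 (prod 0 j)) -mulnBr.
  rewrite Gauss_dvdr //; rewrite coprime_sym; apply: cop_prod => t _.
  by apply: hpM; [case: (pP t)|apply: pB].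
split; first exact: fprod (ltnW jk).
by move=> n hn; apply: cop_prod => t _; apply: copn.
Qed.

Theorem proposition3 (q : nat) (f : nat -> nat) :
  2 <= q ->
  (forall n : nat, f n = 0 \/ f n = 1) ->
  multiplicative f ->
  automatic q f ->
  (forall N : nat, exists p : nat, N < p /\ prime p /\ f p = 0) ->
  exists N : nat, forall p : nat, prime p -> N < p -> f p = 0.
Proof.
move=> q2 hf hmul haut hzero.
case: (hf 1) => f1.
  exists 0 => p _ _; rewrite -(muln1 p) hmul ?coprimen1 //.
  by rewrite f1 muln0.
apply: NNPP => hn.
have hone : forall N, exists p, N < p /\ prime p /\ f p = 1.
  move=> N; apply: NNPP => h; apply: hn; exists N => p pp Np.
  case: (hf p) => // e; exfalso; apply: h; by exists p.
case: haut => L hL.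
have q0 : 0 < q by apply: leq_trans q2.
have hE k : exists x, x < size L /\
    forall n, kernel_seq f q k.+1 1 n = nth (fun _ => 0) L x n.
  have h1 : 1 < q ^ k.+1 by rewrite -(expn0 q) ltn_exp2l.
  by case: (hL k.+1 1 isT h1) => x xs hx; exists x.
pose h k := proj1_sig (constructive_indefinite_description _ (hE k)).
have hh k : h k < size L /\
    forall n, kernel_seq f q k.+1 1 n = nth (fun _ => 0) L (h k) n.
  exact: (proj2_sig (constructive_indefinite_description _ (hE k))).
have [j [k [jk [ks ejk]]]] := pigeon h (size L) (fun k _ => proj1 (hh k)).
pose Q := q ^ (k - j).
have hloop : forall y, q ^ j.+1 %| y -> f (Q * y + 1) = f (y + 1).
  move=> y /dvdnP [n ->].
  have e1 := proj2 (hh j) n; have e2 := proj2 (hh k) n.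
  rewrite /kernel_seq ejk in e1; rewrite /kernel_seq in e2.
  have -> : Q * (n * q ^ j.+1) = q ^ k.+1 * n.
    by rewrite mulnCA -expnD addnS subnK ?(ltnW jk) // mulnC.
  by rewrite e2 mulnC e1.
have kj : 0 < k - j by rewrite subn_gt0.
have Q1 : 1 < Q by rewrite /Q -(expn0 q) ltn_exp2l.
have qQ : q <= Q by rewrite /Q -{1}(expn1 q) leq_pexp2l.
have hpM : forall p, prime p -> q * (Q * Q) < p -> coprime p (q ^ j.+1).
  move=> p pp hp; apply: coprimeXr; rewrite prime_coprime //.
  apply/negP => /(dvdn_leq q0); have : q <= q * (Q * Q) by rewrite leq_pmulr ?muln_gt0 ?(ltnW Q1).
  lia.
have M0 : 0 < q ^ j.+1 by rewrite expn_gt0 q0.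
have [c [c1 [cd [fc cc]]]] := make_c f (q ^ j.+1) (q * (Q * Q)) hmul f1 M0 hone hpM.
have bnd : Q * Q <= q * (Q * Q) by rewrite leq_pmull.
have [P [cQP [pP fP]]] := hzero (c * Q).
apply: (main_contra f q j.+1 Q c P hmul f1 hloop Q1 c1 cd fc _ _ pP fP).
- apply: cc; apply/andP; split; first by rewrite subn_gt0.
  apply: leq_trans bnd; rewrite leq_subLR; nia.
- apply: cc; apply/andP; split; first by rewrite subn_gt0; nia.
  by apply: leq_trans bnd; rewrite leq_subr.
- nia.
- nia.
Qed.
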